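(* In the setting of the context, let $d$ be a positive integer and $J$ a nonempty subset of $\{0,\dots,m\}$. Suppose that $M=M_J(d)$ is bicyclic. Then $M=K_i(d)K_j(d)$ for any $i,j\in J$ such that the degree of $K_i(d)K_j(d)$ over $k$ is maximal (among pairs in $J$).
   Context: $k$ is a global field, all extensions lie in a separable closure. $p$ is a prime, $m\ge2$, $K_0,\dots,K_m$ are cyclic extensions of $k$ with $[K_i:k]=p^{\epsilon_i}$, $\epsilon_0\le\epsilon_i$ for all $i$, $\bigcap_{i=0}^mK_i=k$, and $K_j\not\subseteq K_i$ for $i\ne j$. For $0\le f\le\epsilon_i$, $K_i(f)$ is the unique subfield of $K_i$ of degree $p^f$ over $k$ (so the statement tacitly concerns $d$ for which these subfields are defined). For nonempty $J$, $M_J(d)$ is the compositum of the $K_i(d)$, $i\in J$. A finite Galois extension $F/k$ is bicyclic if $\mathrm{Gal}(F/k)\simeq\mathbb{Z}/n_1\times\mathbb{Z}/n_2$ with $n_1,n_2>1$ and $n_2\mid n_1$. *)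

(* Defs.v *)
From HB Require Import structures.
From mathcomp Require Import all_boot all_order all_algebra all_fingroup all_solvable all_field.
Set Implicit Arguments. Unset Strict Implicit. Unset Printing Implicit Defensive.
Import GRing.Theory.
Local Open Scope ring_scope.

(* x lies in the prime subfield of k (elements a/b with a,b integers, b != 0). *)
Definition prime_elt (k : fieldType) (x : k) : Prop :=
  exists a b : int, b%:~R != 0 :> k /\ x = a%:~R / b%:~R.

Definition prime_poly (k : fieldType) (P : {poly k}) : Prop :=
  forall i, prime_elt P`_i.

Definition fin_dim_over (k : fieldType) (S : k -> Prop) : Prop :=
  exists (n : nat) (b : 'I_n -> k),
    forall x : k, exists c : 'I_n -> k,
      (forall i, S (c i)) /\ x = \sum_(i < n) c i * b i.

Definition transc_over_prime (k : fieldType) (t : k) : Prop :=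
  forall P : {poly k}, prime_poly P -> P.[t] = 0 -> P = 0.

Definition in_prime_rat_fun (k : fieldType) (t x : k) : Prop :=
  exists P Q : {poly k}, [/\ prime_poly P, prime_poly Q, Q.[t] != 0 &
                           x = P.[t] / Q.[t]].

Definition number_field (k : fieldType) : Prop :=
  [pchar k] =i pred0 /\ fin_dim_over (@prime_elt k).

Definition global_function_field (k : fieldType) : Prop :=
  (exists p, p \in [pchar k]) /\
  exists t : k, transc_over_prime t /\ fin_dim_over (in_prime_rat_fun t).

Definition global_field (k : fieldType) : Prop :=
  number_field k \/ global_function_field k.

(* The base field k is represented by 1%AS inside L. *)

Definition cyclic_ext (k : fieldType) (L : splittingFieldType k) (K : {subfield L}) : bool :=
  galois 1%AS K && cyclic 'Gal(K / 1%AS).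

Definition compositum (k : fieldType) (L : splittingFieldType k) (I : finType)
    (J : {set I}) (E : I -> {subfield L}) : {aspace L} :=
  <<(\sum_(i in J) (E i : {vspace L}))%VS>>%AS.

Definition compositum2 (k : fieldType) (L : splittingFieldType k)
    (E F : {subfield L}) : {aspace L} :=
  <<((E : {vspace L}) + F)%VS>>%AS.

Definition bicyclic (k : fieldType) (L : splittingFieldType k) (F : {vspace L}) : Prop :=
  galois 1%AS F /\
  exists n1 n2 : nat, [/\ 1 < n1, 1 < n2, n2 %| n1 &
     'Gal(F / 1%AS) \isog [set: ('Z_n1 * 'Z_n2)%type]]%N.

(* Main.v *)
Require Import Defs.
From HB Require Import structures.
From mathcomp Require Import all_boot all_order all_algebra all_fingroup all_solvable all_field.
Set Implicit Arguments. Unset Strict Implicit.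

Section Grp.
Local Open Scope group_scope.
Lemma grp_lemma (gT : finGroupType) (G : {group gT}) (p d : nat) (I : finType)
  (J : {set I}) (H : I -> {group gT}) :
  prime p -> (0 < d)%N -> abelian G -> ('r(G) <= 2)%N -> J != set0 ->
  (forall l, l \in J -> H l \subset G) ->
  (forall x, x \in G -> x ^+ (p ^ d) = 1) ->
  (forall l, l \in J -> exists2 x, x \in G & x ^+ (p ^ d.-1) \notin H l) ->
  (forall x, x \in G -> (forall l, l \in J -> x \in H l) -> x = 1) ->
  exists i j, [/\ i \in J, j \in J & H i :&: H j = 1].
Proof.
move=> pp d0 cGG rG nJ sHG expG genH capH.
have pG : p.-group G.
  apply/pgroupP => q qp /(Cauchy qp) [x Gx ox].
  have : (q %| p ^ d)%N by rewrite -ox order_dvdn expG.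
  rewrite Euclid_dvdX // d0 andbT dvdn_prime2 // => /eqP ->.
set W := 'Ohm_1(G).
have WE : W = 'Ldiv_(p ^ 1)(G).
  by apply: OhmEabelian => //; apply: abelianS cGG; apply: Ohm_sub.
have pW : p.-group W by apply: pgroupS pG; apply: Ohm_sub.
have lW : (logn p #|W| <= 2)%N by rewrite -(rank_abelian_pgroup pG cGG).
have notW : forall l, l \in J -> ~~ (W \subset H l).
  move=> l lJ; case: (genH l lJ) => x Gx xH; apply/negP => sW; case/negP: xH.
  apply: (subsetP sW); rewrite WE !inE groupX //= -expgM expn1 -expnSr prednK //.
  by rewrite expG.
have [l0 l0J] := set0Pn _ nJ.
have TI : forall K : {group gT}, K \subset G -> K :&: W = 1 -> K = 1 :> {set gT}.
  move=> K sKG /TI_Ohm1 KG; by rewrite -KG (setIidPl sKG).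
set A := H l0 :&: W.
have [A1 | Ant] := eqVneq A 1.
  exists l0, l0; split => //; rewrite setIid; exact: TI (sHG _ l0J) A1.
have pA : p.-group A by apply: pgroupS pW; apply: subsetIr.
have cardA : #|A| = p.
  have AW : (#|A| < #|W|)%N.
    apply: proper_card; rewrite properEneq subsetIr andbT.
    apply/negP => /eqP AW; case/negP: (notW _ l0J); rewrite -AW; exact: subsetIl.
  rewrite (card_pgroup pA) (card_pgroup pW) in AW *.
  rewrite ltn_exp2l ?prime_gt1 // in AW.
  have : logn p #|A| != 0%N.
    apply: contra Ant => /eqP a0; rewrite trivg_card1.
    by rewrite (card_pgroup pA) a0 expn0.
  move: AW lW; case: (logn p #|A|) => [|[|a]] //=.
  by move=> h1 h2 _; have := leq_trans h1 h2.
have [l1 l1J nAl1] : exists2 l1, l1 \in J & ~~ (A \subset H l1).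
  case: (boolP [exists l, (l \in J) && ~~ (A \subset H l)]) => [/existsP [l /andP [lJ nA]] | /existsPn hall]; first by exists l.
  case/negP: Ant; rewrite -subG1; apply/subsetP => x Ax; rewrite inE; apply/eqP.
  apply: capH.
    by apply: (subsetP (Ohm_sub 1 G)); apply: (subsetP (subsetIr (H l0) W)).
  move=> l lJ; move: (hall l); rewrite lJ /= negbK => /subsetP; exact.
have TIA : A :&: H l1 = 1 by apply: prime_TIg => //; rewrite cardA.
exists l0, l1; split => //; apply: TI.
  by apply: subset_trans (sHG _ l0J); apply: subsetIl.
by rewrite setIAC; exact: TIA.
Qed.
Lemma pair_expg (A B : finGroupType) (a : A) (b : B) n : (a, b) ^+ n = (a ^+ n, b ^+ n).
Proof. by elim: n => [|n IH] //; rewrite !expgS IH. Qed.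

Lemma rank_ZZ n1 n2 : ('r([set: 'Z_n1 * 'Z_n2]) <= 2)%N.
Proof.
have cT : abelian [set: 'Z_n1 * 'Z_n2].
  apply/centsP => x _ y _; case: x y => [x1 x2] [y1 y2].
  by rewrite /commute /= ; congr (_, _); apply: Zp_mulgC.
rewrite -grank_abelian //.
set a : 'Z_n1 * 'Z_n2 := (Zp1, 1). set b : 'Z_n1 * 'Z_n2 := (1, Zp1).
have E : [set: 'Z_n1 * 'Z_n2]%G = <<[set a; b]>>%G.
  apply/val_inj => /=; apply/eqP; rewrite eqEsubset subsetT andbT; apply/subsetP => -[x1 x2] _.
  have -> : (x1, x2) = a ^+ x1 * b ^+ x2.
    rewrite !pair_expg !Zp1_expgz !expg1n. by apply/eqP; rewrite xpair_eqE /= mulg1 mul1g !eqxx.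
  by rewrite groupM ?groupX ?mem_gen // !inE eqxx ?orbT.
rewrite E; apply: leq_trans (grank_min [set a; b]) _; rewrite cards2; by case: (_ != _).
Qed.
End Grp.

Section Gal.
Variables (k : fieldType) (L : splittingFieldType k).
Local Open Scope group_scope.

Lemma agenv_le (U : {vspace L}) (F : {subfield L}) : (U <= F)%VS -> (agenv U <= F)%VS.
Proof. by move=> sUF; rewrite -(subfield_closed F) agenvS. Qed.

Lemma sub_galois_abelian (E F : {subfield L}) :
  galois 1 E -> abelian 'Gal(E / 1) -> (F <= E)%VS -> galois 1 F.
Proof.
move=> gE cE sFE.
have nF : 'Gal(E / F) <| 'Gal(E / 1) by rewrite -sub_abelian_normal // galS // sub1v.
have := normal_fixedField_galois gE nF.
have gFE : galois F E by apply: galoisS gE; rewrite sub1v sFE.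
by rewrite (galois_fixedField gFE).
Qed.

Lemma sub_galois_cyclic (E F : {subfield L}) :
  galois 1 E -> cyclic 'Gal(E / 1) -> (F <= E)%VS -> galois 1 F -> cyclic 'Gal(F / 1).
Proof.
move=> gE cE sFE gF.
have nF : normalField 1 F by case/and3P: gF.
rewrite -(isog_cyclic (normalField_isog gE _ nF)); last by rewrite sub1v sFE.
exact: quotient_cyclic.
Qed.

Lemma aspace_eq (A B : {aspace L}) : (A : {vspace L}) = B -> A = B.
Proof. by case: A B => [a ha] [b hb] /= eab; subst b; congr ASpace; apply: bool_irrelevance. Qed.

End Gal.

Lemma abelian_ZZ n1 n2 : abelian [set: 'Z_n1 * 'Z_n2].
Proof.
apply/centsP => x _ y _; case: x y => [x1 x2] [y1 y2].
by rewrite /commute /= ; congr (_, _); apply: Zp_mulgC.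
Qed.

Unset Implicit Arguments. Set Strict Implicit.

Theorem lemma4p4
  (k : fieldType) (hk : global_field k) (L : splittingFieldType k)
  (p : nat) (hp : prime p) (m : nat) (hm : (2 <= m)%N)
  (K : 'I_m.+1 -> {subfield L}) (eps : 'I_m.+1 -> nat)
  (hcyc : forall i, cyclic_ext (K i))
  (hdeg : forall i, \dim (K i) = (p ^ eps i)%N)
  (heps : forall i, (eps ord0 <= eps i)%N)
  (hcap : (\bigcap_i (K i : {vspace L}))%VS = 1%VS)
  (hnsub : forall i j, i != j -> ~~ (K j <= K i)%VS)
  (d : nat) (hd : (0 < d)%N) (J : {set 'I_m.+1}) (hJ : J != set0)
  (Kd : 'I_m.+1 -> {subfield L})
  (hKd : forall i, i \in J ->
     [/\ (d <= eps i)%N, (Kd i <= K i)%VS & \dim (Kd i) = (p ^ d)%N])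
  (hbic : bicyclic (compositum J Kd)) :
  forall i j, i \in J -> j \in J ->
    (forall i' j', i' \in J -> j' \in J ->
       (\dim (compositum2 (Kd i') (Kd j')) <= \dim (compositum2 (Kd i) (Kd j)))%N) ->
    compositum J Kd = compositum2 (Kd i) (Kd j).
Proof.
move=> i j iJ jJ hmax.
set M := compositum J Kd.
have [gM [n1 [n2 [_ _ _ isoG]]]] := hbic.
set G := ('Gal(M / 1%AS))%G.
have cG : abelian G by rewrite (isog_abelian isoG) abelian_ZZ.
have rG : ('r(G)%g <= 2)%N by rewrite (isog_rank isoG) rank_ZZ.
have sKdM : forall l, l \in J -> (Kd l <= M)%VS.
  move=> l lJ; apply: subv_trans (sub_agenv _); exact: (sumv_sup l) (subvv _).
have gKd : forall l, l \in J -> galois 1 (Kd l).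
  move=> l lJ; have [_ sl _] := hKd l lJ; have /andP[gK cK] := hcyc l.
  exact: sub_galois_abelian gK (cyclic_abelian cK) sl.
have cKd : forall l, l \in J -> cyclic ('Gal(Kd l / 1%AS))%g.
  move=> l lJ; have [_ sl _] := hKd l lJ; have /andP[gK cK] := hcyc l.
  exact: sub_galois_cyclic gK cK sl (gKd l lJ).
have cardKd : forall l, l \in J -> #|('Gal(Kd l / 1%AS))%g| = (p ^ d)%N.
  move=> l lJ; have [_ _ dl] := hKd l lJ.
  by rewrite -galois_dim ?gKd // dimv1 divn1 dl.
pose H l := ('Gal(M / Kd l))%G.
have sHG : forall l, l \in J -> (H l \subset G)%g by move=> l _; apply: galS; apply: sub1v.
have sKME : forall l, l \in J -> (1 <= Kd l <= M)%VS by move=> l lJ; rewrite sub1v sKdM.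
have nKd : forall l, l \in J -> normalField 1 (Kd l) by move=> l /gKd /and3P[].
have isoH : forall l, l \in J -> (G / H l \isog 'Gal(Kd l / 1%AS))%g.
  by move=> l lJ; exact: (normalField_isog gM (sKME l lJ) (nKd l lJ)).
have nH : forall l, l \in J -> (H l <| G)%g.
  by move=> l lJ; apply: normalField_normal (sKME l lJ) (nKd l lJ).
have qcard : forall l, l \in J -> #|(G / H l)%g| = (p ^ d)%N.
  by move=> l lJ; rewrite (card_isog (isoH l lJ)) cardKd.
have qcyc : forall l, l \in J -> cyclic (G / H l)%g.
  by move=> l lJ; rewrite (isog_cyclic (isoH l lJ)) cKd.
have NH : forall l x, l \in J -> x \in G -> x \in 'N(H l)%g.
  by move=> l x lJ Gx; apply: (subsetP (normal_norm (nH l lJ))).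
have powH : forall l x, l \in J -> x \in G -> (x ^+ (p ^ d) \in H l)%g.
  move=> l x lJ Gx; apply: coset_idr; first by rewrite groupX ?NH.
  rewrite morphX ?NH //=; apply/eqP; rewrite -order_dvdn -(qcard l lJ).
  by rewrite order_dvdG // mem_quotient.
have capH : forall x, x \in G -> (forall l, l \in J -> x \in H l) -> x = 1%g.
  move=> x Gx xH; apply/eqP/gal_eqP => a Ma; rewrite gal_id.
  have : (M <= fixedField [set x])%VS.
    apply: agenv_le; apply/subv_sumP => l lJ.
    by rewrite -galois_connection ?sKdM // sub1set; exact: xH.
  move/subvP/(_ a Ma)/mem_fixedFieldP => [_]; apply; exact: set11.
have genH : forall l, l \in J -> exists2 x, x \in G & (x ^+ (p ^ d.-1) \notin H l)%g.
  move=> l lJ; case/cyclicP: (qcyc l lJ) => c Dc.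
  have Gc : c \in (G / H l)%g by rewrite Dc cycle_id.
  case/morphimP: Gc => x Nx Gx Dcx; exists x => //; apply/negP => xH.
  have : (#[c]%g %| p ^ d.-1)%N.
    by rewrite order_dvdn Dcx -morphX //= coset_id.
  rewrite orderE -Dc qcard // dvdn_Pexp2l ?prime_gt1 //.
  by case: (d) hd => // n _; rewrite ltnn.
have [i1 [j1 [i1J j1J HI]]] := grp_lemma hp hd cG rG hJ sHG
  (fun x Gx => capH _ (groupX _ Gx) (fun l lJ => powH l x lJ Gx)) genH capH.
have sCM : forall a b, a \in J -> b \in J -> (compositum2 (Kd a) (Kd b) <= M)%VS.
  by move=> a b aJ bJ; apply: agenv_le; rewrite subv_add !sKdM.
set C := compositum2 (Kd i1) (Kd j1).
have MC : (M <= C)%VS.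
  have gCM : galois C M by apply: galoisS gM; rewrite sub1v sCM.
  rewrite -(galois_fixedField gCM).
  apply: subv_trans (fixedFieldS (_ : 'Gal(M / C) \subset [1 gal_of M])%g).
    by apply/subvP => a Ma; apply/fixedFieldP => // y /set1P ->; rewrite gal_id.
  rewrite -HI subsetI !galS //.
  exact: (subv_trans (addvSr (Kd i1 : {vspace L}) (Kd j1)) (sub_agenv _)).
  exact: (subv_trans (addvSl (Kd i1 : {vspace L}) (Kd j1)) (sub_agenv _)).
apply: esym; apply: aspace_eq; apply/eqP; rewrite eqEdim sCM //=.
exact: leq_trans (dimvS MC) (hmax i1 j1 i1J j1J).
Qed.
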